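(* If $\varphi$ is an automorphism of $E$ of type 4, then the eigenspace of its linearization $\varphi_\ell$ in $L$ corresponding to the eigenvalue $-1$ is nonzero.
   Context: $F$ is a field of characteristic zero, $L$ an infinite-dimensional $F$-vector space with basis $e_1,e_2,\ldots$, $E$ the Grassmann algebra of $L$. An automorphism $\varphi$ of $E$ with $\varphi^2=\mathrm{id}$ is of type 4 if for every basis $\gamma$ of $L$ no element $v\in\gamma$ satisfies $\varphi(v)=\pm v$. Linearization: write $\varphi(e_i)=u_i+v_i$ with $u_i\in L$ and $v_i$ a linear combination of monomials of length $\ge2$; $\varphi_\ell$ is the endomorphism of $E$ with $\varphi_\ell(e_i)=u_i$ for all $i$ (it is an automorphism of order dividing 2, so $\varphi_\ell$ restricted to $L$ has eigenvalues among $\pm1$). *)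

(* Defs.v *)
(* Concrete model of the Grassmann algebra E of a
   countably-infinite-dimensional space L with basis e_0, e_1, ...
   An element of E is a finitely supported function from finite subsets of nat
   (monomials e_{i1} ... e_{ik}, i1 < ... < ik) to F. *)
From HB Require Import structures.
From mathcomp Require Import all_boot all_order all_algebra.
From mathcomp Require Import finmap.
Set Implicit Arguments. Unset Strict Implicit. Unset Printing Implicit Defensive.
Import Order.TTheory GRing.Theory Num.Theory.
Local Open Scope ring_scope.


Section Grassmann.
Variable F : fieldType.

Definition vec := {fset nat} -> F.

Definition inE (x : vec) : Prop :=
  exists A : {fset {fset nat}}, forall S, S \notin A -> x S = 0.

Definition inL (x : vec) : Prop :=
  inE x /\ forall S, x S != 0 -> #|` S| = 1%N.

Definition vzero : vec := fun _ => 0.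
Definition vadd (x y : vec) : vec := fun S => x S + y S.
Definition vopp (x : vec) : vec := fun S => - x S.
Definition vscale (c : F) (x : vec) : vec := fun S => c * x S.
Definition vone : vec := fun S => if S == fset0 then 1 else 0.
Definition gen (i : nat) : vec := fun S => if S == [fset i]%fset then 1 else 0.

(* sign of e_S e_T = sign S T * e_(S u T) for disjoint S, T *)
Definition gsign (S T : {fset nat}) : F :=
  (-1) ^+ (\sum_(s <- enum_fset S) \sum_(t <- enum_fset T) (t < s)%N)%N.

Definition vmul (x y : vec) : vec := fun U =>
  \sum_(S <- enum_fset (fpowerset U)) gsign S (U `\` S)%fset * x S * y (U `\` S)%fset.

Definition lincomb (n : nat) (c : 'I_n -> F) (w : 'I_n -> vec) : vec :=
  fun S => \sum_(i < n) c i * w i S.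

Definition basisL (gamma : vec -> Prop) : Prop :=
  (forall v, gamma v -> inL v) /\
  (forall n (w : 'I_n -> vec) (c : 'I_n -> F),
      injective w -> (forall i, gamma (w i)) ->
      lincomb c w = vzero -> forall i, c i = 0) /\
  (forall u, inL u -> exists n (w : 'I_n -> vec) (c : 'I_n -> F),
      (forall i, gamma (w i)) /\ u = lincomb c w).

Definition alg_endo (f : vec -> vec) : Prop :=
  (forall x, inE x -> inE (f x)) /\
  (forall x y, inE x -> inE y -> f (vadd x y) = vadd (f x) (f y)) /\
  (forall c x, inE x -> f (vscale c x) = vscale c (f x)) /\
  (forall x y, inE x -> inE y -> f (vmul x y) = vmul (f x) (f y)) /\
  f vone = vone.

Definition alg_auto (f : vec -> vec) : Prop :=
  alg_endo f /\
  (forall x y, inE x -> inE y -> f x = f y -> x = y) /\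
  (forall y, inE y -> exists2 x, inE x & f x = y).

Definition involutive_on_E (f : vec -> vec) : Prop :=
  forall x, inE x -> f (f x) = x.

Definition type4 (f : vec -> vec) : Prop :=
  forall gamma, basisL gamma ->
    ~ (exists v, gamma v /\ (f v = v \/ f v = vopp v)).

Definition lin_part (x : vec) : vec := fun S => if #|` S| == 1%N then x S else 0.

Definition linearization (phi psi : vec -> vec) : Prop :=
  alg_endo psi /\ forall i, psi (gen i) = lin_part (phi (gen i)).

End Grassmann.

(* Main.v *)
Require Import Defs.
From HB Require Import structures.
From mathcomp Require Import all_boot all_order all_algebra.
From mathcomp Require Import finmap.
From mathcomp Require Import zify ring.
From Stdlib Require Import FunctionalExtensionality Classical.
Set Implicit Arguments. Unset Strict Implicit. Unset Printing Implicit Defensive.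
Import Order.TTheory GRing.Theory Num.Theory.
Local Open Scope ring_scope.
Local Open Scope fset_scope.

Section G.
Variable F : fieldType.
Local Notation vec := (vec F).
Local Notation inE := Defs.inE.
Implicit Types (x y z : vec) (S T U : {fset nat}).

Definition bounded (N : nat) (x : vec) := forall S, x S != 0 -> forall s, s \in S -> (s < N)%N.

Lemma bounded_inE N x : bounded N x -> inE x.
Proof.
move=> bx; exists (fpowerset (seq_fset tt (iota 0 N))) => S.
apply: contraNeq => xS; rewrite fpowersetE; apply/fsubsetP => s sS.
by rewrite seq_fsetE mem_iota add0n (bx _ xS).
Qed.

Lemma inE_bounded x : inE x -> exists N, bounded N x.
Proof.
case=> A hA; exists (\max_(S <- enum_fset A) \max_(s <- enum_fset S) s.+1)%N => S xS s sS.
have SA : S \in A by apply: contraNT xS => /hA ->; rewrite eqxx.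
apply: (@leq_trans (\max_(s <- enum_fset S) s.+1)%N).
  exact: (@leq_bigmax_seq _ (enum_fset S) xpredT (fun s => s.+1) s).
exact: (@leq_bigmax_seq _ (enum_fset A) xpredT (fun S => \max_(s <- enum_fset S) s.+1)%N S).
Qed.

Lemma bounded_mono N M x : (N <= M)%N -> bounded N x -> bounded M x.
Proof. by move=> NM bx S xS s sS; apply: leq_trans NM; apply: bx sS. Qed.

Definition vsum (s : seq nat) (f : nat -> vec) : vec :=
  foldr (fun (i : nat) (acc : vec) => vadd (f i) acc) (vzero F) s.

Lemma vsumE s f U : vsum s f U = \sum_(i <- s) f i U.
Proof. by elim: s => [|i s IH]; rewrite ?big_nil ?big_cons //= /vadd IH. Qed.

Lemma vmul_supp x y U : vmul x y U != 0 ->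
  exists S, [/\ S `<=` U, x S != 0 & y (U `\` S) != 0].
Proof.
move=> h.
have : has (fun S => (x S != 0) && (y (U `\` S) != 0)) (enum_fset (fpowerset U)).
  apply: contraNT h => /hasPn H; apply/eqP; rewrite /vmul big1_seq // => S /andP[_ SU].
  by have := H S SU; case: eqP => [->|_] /=; [rewrite mulr0 mul0r|move/negPn/eqP->; rewrite mulr0].
case/hasP => S SU /andP[h1 h2]; exists S; split=> //.
by move: SU; rewrite fpowersetE.
Qed.

Lemma bounded_vmul N M x y : bounded N x -> bounded M y -> bounded (maxn N M) (vmul x y).
Proof.
move=> bx byy U /vmul_supp [S [SU xS yS]] s sU.
case sS: (s \in S).
  by apply: leq_trans (leq_maxl _ _); apply: bx sS.
apply: leq_trans (leq_maxr _ _); apply: (byy _ yS); by rewrite in_fsetD sS.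
Qed.

Lemma bounded_vadd N x y : bounded N x -> bounded N y -> bounded N (vadd x y).
Proof.
move=> bx byy S; rewrite /vadd => h.
case: (eqVneq (x S) 0) => [x0|]; last exact: bx.
by apply: byy; move: h; rewrite x0 add0r.
Qed.

Lemma bounded_vscale N c x : bounded N x -> bounded N (vscale c x).
Proof. by move=> bx S; rewrite /vscale mulf_eq0 negb_or => /andP[_]; apply: bx. Qed.

Lemma bounded_vopp N x : bounded N x -> bounded N (vopp x).
Proof. by move=> bx S; rewrite /vopp oppr_eq0; apply: bx. Qed.

Lemma bounded_vone : bounded 0 (vone F).
Proof. by move=> S; rewrite /vone; case: ifP => [/eqP-> _ s|]; rewrite ?in_fset0 ?eqxx. Qed.

Lemma bounded_gen i : bounded i.+1 (gen F i).
Proof. by move=> S; rewrite /gen; case: ifP => [/eqP-> _ s|]; rewrite ?in_fset1 ?eqxx // => /eqP->. Qed.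

Lemma bounded_lin N x : bounded N x -> bounded N (lin_part x).
Proof. move=> bx S; rewrite /lin_part; case: ifP => _; [exact: bx|by rewrite eqxx]. Qed.

Lemma bounded_vsum N s f : (forall i, bounded N (f i)) -> bounded N (vsum s f).
Proof.
move=> h; elim: s => [|i s IH] /=; last exact: bounded_vadd.
by move=> S; rewrite /vzero eqxx.
Qed.

Lemma bounded_vzero N : bounded N (vzero F).
Proof. by move=> S; rewrite /vzero eqxx. Qed.

Lemma inE_vadd x y : inE x -> inE y -> inE (vadd x y).
Proof.
case/inE_bounded=> N bx /inE_bounded [M byy]; apply: (@bounded_inE (maxn N M)).
by apply: bounded_vadd; [apply: (bounded_mono (leq_maxl N M) bx)|apply: (bounded_mono (leq_maxr N M) byy)].
Qed.

Lemma inE_vmul x y : inE x -> inE y -> inE (vmul x y).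
Proof.
case/inE_bounded=> N bx /inE_bounded [M byy]; apply: (@bounded_inE (maxn N M)).
exact: bounded_vmul.
Qed.

Lemma inE_vopp x : inE x -> inE (vopp x).
Proof. by case/inE_bounded=> N bx; apply: (@bounded_inE N); apply: bounded_vopp. Qed.

Lemma inE_vscale c x : inE x -> inE (vscale c x).
Proof. by case/inE_bounded=> N bx; apply: (@bounded_inE N); apply: bounded_vscale. Qed.

Lemma inE_lin x : inE x -> inE (lin_part x).
Proof. by case/inE_bounded=> N bx; apply: (@bounded_inE N); apply: bounded_lin. Qed.

Lemma inE_gen i : inE (gen F i).
Proof. exact: (bounded_inE (@bounded_gen i)). Qed.

Lemma inE_vone : inE (vone F).
Proof. exact: (bounded_inE bounded_vone). Qed.

Lemma inE_vzero : inE (vzero F).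
Proof. exact: (bounded_inE (@bounded_vzero 0)). Qed.

Lemma inE_vsum s f : (forall i, inE (f i)) -> inE (vsum s f).
Proof. by move=> h; elim: s => [|i s IH] /=; [exact: inE_vzero | exact: inE_vadd]. Qed.

Lemma sum_single (I : eqType) (r : seq I) (G : I -> F) j :
  uniq r -> (forall i, i \in r -> i != j -> G i = 0) ->
  \sum_(i <- r) G i = if j \in r then G j else 0.
Proof.
move=> ur h; case: ifP => jr.
  rewrite (bigD1_seq j) //= big1_seq ?addr0 // => i /andP[ij ir]; exact: h.
by rewrite big1_seq // => i [ir]; apply: h => //; apply: contraTneq ir => ->; rewrite jr.
Qed.

Lemma vmul0E x y : vmul x y fset0 = x fset0 * y fset0.
Proof.
rewrite /vmul (@sum_single _ _ _ fset0) ?fset_uniq //.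
  by rewrite fpowersetE fsub0set /gsign /= fsetD0 !big_nil expr0 mul1r.
by move=> S; rewrite fpowersetE fsubset0 => /eqP ->; rewrite eqxx.
Qed.

Lemma gen_mulE i x U : vmul (gen F i) x U =
  if i \in U then gsign F [fset i] (U `\ i) * x (U `\ i) else 0.
Proof.
rewrite /vmul (@sum_single _ _ _ [fset i]) ?fset_uniq //.
  by rewrite fpowersetE fsub1set /gen eqxx mulr1.
by move=> S _ /negbTE h; rewrite /gen h mulr0 mul0r.
Qed.

Lemma gen_gen i : vmul (gen F i) (gen F i) = vzero F.
Proof.
apply: functional_extensionality => U; rewrite gen_mulE /gen /vzero.
case: ifP => // iU; case: eqP => [h|]; last by rewrite mulr0.
by have := in_fset1 i i; rewrite eqxx -h in_fsetD1 eqxx.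
Qed.

Lemma gsign1 i T : (forall t, t \in T -> (i < t)%N) -> gsign F [fset i] T = 1.
Proof.
move=> h; rewrite /gsign big1_seq ?expr0 // => s si.
apply: big1_seq => t tT; move: si; rewrite in_fset1 => /eqP ->.
by rewrite ltnNge (ltnW (h t tT)).
Qed.

Definition deg_ge (d : nat) x := forall S, (#|` S| < d)%N -> x S = 0.
Definition deg_le (d : nat) x := forall S, (d < #|` S|)%N -> x S = 0.

Lemma cardD_sub S U : S `<=` U -> (#|` U `\` S| + #|` S| = #|` U|)%N.
Proof. move=> SU; rewrite cardfsDS // subnK //; exact: fsubset_leq_card. Qed.

Lemma deg_ge_mul a b x y : deg_ge a x -> deg_ge b y -> deg_ge (a + b) (vmul x y).
Proof.
move=> hx hy U hU; rewrite /vmul big1_seq // => S SU0; have SU : S `<=` U by rewrite -fpowersetE; exact: SU0.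
have := cardD_sub SU => e.
case: (ltnP #|` S| a) => Sa; first by rewrite hx ?mulr0 ?mul0r.
by rewrite hy ?mulr0 //; lia.
Qed.

Lemma deg_le_mul a b x y : deg_le a x -> deg_le b y -> deg_le (a + b) (vmul x y).
Proof.
move=> hx hy U hU; rewrite /vmul big1_seq // => S SU0; have SU : S `<=` U by rewrite -fpowersetE; exact: SU0.
have := cardD_sub SU => e.
case: (ltnP a #|` S|) => Sa; first by rewrite hx ?mulr0 ?mul0r.
by rewrite hy ?mulr0 //; lia.
Qed.

Lemma deg_ge_mono a b x : (b <= a)%N -> deg_ge a x -> deg_ge b x.
Proof. move=> ba h S Sb; apply: h; exact: leq_trans ba. Qed.

Lemma deg_le_mono a b x : (a <= b)%N -> deg_le a x -> deg_le b x.
Proof. move=> ba h S Sb; apply: h; exact: leq_ltn_trans Sb. Qed.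

Lemma deg_ge0 x : deg_ge 0 x.
Proof. by []. Qed.

Lemma vmul_diffE (a b c e : vec) U :
  (vmul a b U - vmul c e U = vmul (vadd a (vopp c)) b U + vmul c (vadd b (vopp e)) U)%R.
Proof.
rewrite /vmul -sumrB -big_split /=; apply: eq_bigr => S _ /=.
rewrite /vadd /vopp; ring.
Qed.

Definition zc (i : nat) T := all (fun t => (i < t)%N) (enum_fset T).
Definition zf (i : nat) y : vec := fun T => if zc i T then y (i |` T) else 0.

Lemma zcP i T : zc i T -> forall t, t \in T -> (i < t)%N.
Proof. by move/allP. Qed.

Lemma zc_notin i T : zc i T -> i \notin T.
Proof. by move=> h; apply/negP => /(zcP h); rewrite ltnn. Qed.

Lemma zc_card i T : zc i T -> #|` i |` T| = #|` T|.+1.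
Proof. by move=> h; rewrite cardfsU1 (zc_notin h). Qed.

Lemma gen_zE i y U : vmul (gen F i) (zf i y) U =
  if (i \in U) && zc i (U `\ i) then y U else 0.
Proof.
rewrite gen_mulE /zf; case: ifP => iU //=; case: ifP => h; last by rewrite mulr0.
by rewrite gsign1 ?mul1r ?fsetD1K //; apply: zcP.
Qed.

Lemma min_fset U : U != fset0 -> exists2 m, m \in U & forall t, t \in U -> (m <= t)%N.
Proof.
move=> /fset0Pn ex; have := ex_minnP ex => -[m mU mmin]; exists m => //.
Qed.

Lemma decomp N y : bounded N y ->
  y = vadd (vscale (y fset0) (vone F)) (vsum (iota 0 N) (fun i => vmul (gen F i) (zf i y))).
Proof.
move=> hb; apply: functional_extensionality => U.
rewrite /vadd /vscale /vone vsumE.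
under eq_bigr do rewrite gen_zE.
case: (eqVneq U fset0) => [->|U0].
  by rewrite big1 ?mulr1 ?addr0 // => i _; rewrite in_fset0.
rewrite mulr0 add0r.
case: (eqVneq (y U) 0) => [->|yU]; first by rewrite big1 // => i _; case: ifP.
have [m mU mmin] := min_fset U0.
rewrite (@sum_single _ _ _ m) ?iota_uniq //.
  rewrite mem_iota add0n (hb _ yU _ mU) mU /=.
  case: ifP => // /negbT /allP []; move=> t; rewrite in_fsetD1 => /andP[tm tU].
  by rewrite ltn_neqAle eq_sym tm mmin.
move=> i _ im; case: ifP => // /andP[iU /zcP h].
have := h m; rewrite in_fsetD1 mU eq_sym im => /(_ isT) lt.
by have := mmin i iU; rewrite leqNgt lt.
Qed.

Lemma bounded_zf N i y : bounded N y -> bounded N (zf i y).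
Proof.
move=> hb T; rewrite /zf; case: ifP => _; last by rewrite eqxx.
move=> h t tT; apply: (hb _ h); by rewrite in_fset1U tT orbT.
Qed.

Lemma deg_ge_zf d i y : deg_ge d y -> deg_ge d.-1 (zf i y).
Proof.
move=> h T hT; rewrite /zf; case: ifP => // c; apply: h; rewrite zc_card //.
by case: d hT => //.
Qed.

Lemma deg_le_zf d i y : deg_le d y -> deg_le d.-1 (zf i y).
Proof.
move=> h T hT; rewrite /zf; case: ifP => // c; apply: h; rewrite zc_card //.
by case: d hT => //= d hT; apply: leq_trans hT _.
Qed.

Lemma deg_le0_zf i y : deg_le 0 y -> zf i y = vzero F.
Proof.
move=> h; apply: functional_extensionality => T; rewrite /zf /vzero.
by case: ifP => // c; apply: h; rewrite zc_card.
Qed.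

Section Endo.
Variable f : vec -> vec.
Hypothesis hf : alg_endo f.

Lemma f_add x y : inE x -> inE y -> f (vadd x y) = vadd (f x) (f y).
Proof. by case: hf => _ [h _]; apply: h. Qed.
Lemma f_scale c x : inE x -> f (vscale c x) = vscale c (f x).
Proof. by case: hf => _ [_ [h _]]; apply: h. Qed.
Lemma f_mul x y : inE x -> inE y -> f (vmul x y) = vmul (f x) (f y).
Proof. by case: hf => _ [_ [_ [h _]]]; apply: h. Qed.
Lemma f_one : f (vone F) = vone F.
Proof. by case: hf => _ [_ [_ [_ h]]]. Qed.
Lemma f_inE x : inE x -> inE (f x).
Proof. by case: hf => h _; apply: h. Qed.

Lemma f_zero : f (vzero F) = vzero F.
Proof.
have e : vzero F = vscale 0 (vone F).
  by apply: functional_extensionality => S; rewrite /vscale mul0r.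
by rewrite {1}e f_scale; [rewrite f_one|exact: inE_vone].
Qed.

Lemma f_opp x : inE x -> f (vopp x) = vopp (f x).
Proof.
have e z : vopp z = vscale (-1) z.
  by apply: functional_extensionality => S; rewrite /vscale /vopp mulN1r.
by move=> hx; rewrite !e f_scale.
Qed.

Lemma f_sub x y : inE x -> inE y -> f (vadd x (vopp y)) = vadd (f x) (vopp (f y)).
Proof. by move=> hx hy; rewrite f_add; [rewrite f_opp|done|apply: inE_vopp]. Qed.

Lemma f_vsum s G : (forall i, inE (G i)) -> f (vsum s G) = vsum s (fun i => f (G i)).
Proof.
move=> h; elim: s => [|i s IH] /=; first exact: f_zero.
by rewrite f_add ?IH //; apply: inE_vsum.
Qed.

Lemma f_decomp N y : bounded N y ->
  f y = vadd (vscale (y fset0) (vone F))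
             (vsum (iota 0 N) (fun i => vmul (f (gen F i)) (f (zf i y)))).
Proof.
move=> hb; rewrite {1}(decomp hb).
have hz i : inE (zf i y) by apply: (@bounded_inE N); apply: bounded_zf.
rewrite f_add; last first.
- by apply: inE_vsum => i; apply: inE_vmul => //; apply: inE_gen.
- by apply: inE_vscale; apply: inE_vone.
rewrite f_scale; last exact: inE_vone.
rewrite f_one f_vsum; last first.
  by move=> i; apply: inE_vmul => //; apply: inE_gen.
congr vadd; congr vsum; apply: functional_extensionality => i.
by rewrite f_mul //; apply: inE_gen.
Qed.

End Endo.

Lemma vone_nz U : (0 < #|` U|)%N -> vone F U = 0.
Proof. by move=> hU; rewrite /vone; case: eqP => // e; move: hU; rewrite e cardfs0. Qed.

Lemma inE_zf i y : inE y -> inE (zf i y).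
Proof. by case/inE_bounded=> N hb; apply: (@bounded_inE N); apply: bounded_zf. Qed.

Section K.
Variables f g : vec -> vec.
Hypotheses (hf : alg_endo f) (hg : alg_endo g).

Lemma K1 : (forall i, deg_ge 1 (f (gen F i))) ->
  forall d y, inE y -> deg_ge d y -> deg_ge d (f y).
Proof.
move=> h1; elim=> [|d IH] y hy hd U hU; first by move: hU; rewrite ltn0.
have [N hb] := inE_bounded hy.
rewrite (f_decomp hf hb) /vadd /vscale vsumE (hd fset0) ?cardfs0 // mul0r add0r.
rewrite big1 // => i _.
have hz : deg_ge d (f (zf i y)).
  by apply: IH; [apply: inE_zf | apply: (deg_ge_zf (d := d.+1))].
by apply: (deg_ge_mul (h1 i) hz); rewrite add1n.
Qed.

Lemma K3 : (forall i, deg_le 1 (f (gen F i))) ->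
  forall d y, inE y -> deg_le d y -> deg_le d (f y).
Proof.
move=> h1; elim=> [|d IH] y hy hd U hU; have [N hb] := inE_bounded hy;
  rewrite (f_decomp hf hb) /vadd /vscale vsumE vone_nz ?mulr0 ?add0r //;
  try exact: leq_ltn_trans hU.
  rewrite big1 // => i _; rewrite deg_le0_zf // f_zero // /vmul big1 // => S _.
  by rewrite /vzero mulr0.
rewrite big1 // => i _.
have hz : deg_le d (f (zf i y)).
  by apply: IH; [apply: inE_zf | apply: (deg_le_zf (d := d.+1))].
by apply: (deg_le_mul (h1 i) hz); rewrite add1n.
Qed.

Lemma K2 : (forall i, deg_ge 1 (f (gen F i))) -> (forall i, deg_ge 1 (g (gen F i))) ->
  (forall i, deg_ge 2 (vadd (f (gen F i)) (vopp (g (gen F i))))) ->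
  forall d y, inE y -> deg_ge d y -> deg_ge d.+1 (vadd (f y) (vopp (g y))).
Proof.
move=> hf1 hg1 hfg.
have step d y : inE y -> deg_ge d y ->
    (forall i, deg_ge d (vadd (f (zf i y)) (vopp (g (zf i y))))) ->
    deg_ge d.+1 (vadd (f y) (vopp (g y))).
  move=> hy hd hz U hU; have [N hb] := inE_bounded hy.
  rewrite (f_decomp hf hb) (f_decomp hg hb) /vadd /vopp /vscale !vsumE.
  rewrite opprD addrACA subrr add0r -sumrB big1 // => i _.
  rewrite vmul_diffE.
  rewrite (deg_ge_mul (hfg i) (K1 hf1 (inE_zf i hy) (deg_ge_zf i hd))); last first.
    by case: d hd hz hU => [|d] _ _ hU; apply: leq_trans hU _; rewrite ?add2n.
  by rewrite add0r (deg_ge_mul (hg1 i) (hz i)).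
elim=> [|d IH] y hy hd; apply: step => // i.
by apply: IH; [apply: inE_zf | apply: (deg_ge_zf (d := d.+1))].
Qed.

End K.

Lemma head_fset1 t : head 0%N (enum_fset [fset t]) = t.
Proof.
have mt : t \in enum_fset [fset t].
  by change (is_true (t \in [fset t])); rewrite in_fset1.
have : head 0%N (enum_fset [fset t]) \in enum_fset [fset t].
  by case: (enum_fset _) mt => //= a l _; rewrite mem_head.
by move=> h; change (is_true (head 0%N (enum_fset [fset t]) \in [fset t])) in h; move: h; rewrite in_fset1 => /eqP.
Qed.

Lemma gen_fset1 i j : gen F i [fset j] = if j == i then 1 else 0.
Proof.
rewrite /gen; case: (eqVneq j i) => [->|ji]; first by rewrite eqxx.
case: eqP => // e; have := in_fset1 j j; rewrite eqxx e in_fset1 (negbTE ji) //.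
Qed.

Lemma inL_gen i : inL (gen F i).
Proof.
split; first exact: inE_gen.
by move=> S; rewrite /gen; case: ifP => [/eqP -> _|]; rewrite ?cardfs1 ?eqxx.
Qed.

Lemma std_basis : basisL (fun v : vec => exists i, v = gen F i).
Proof.
split; first by move=> v [i ->]; apply: inL_gen.
split.
  move=> n w c injw hw hlin k.
  have [ik ek] := hw k.
  have := congr1 (fun h => h [fset ik]) hlin; rewrite /lincomb /vzero.
  rewrite (bigD1 k) //= big1 ?addr0 ?ek ?gen_fset1 ?eqxx ?mulr1 // => j jk.
  have [ij ej] := hw j; rewrite ej gen_fset1; case: (eqVneq ik ij) => [e|]; last by rewrite mulr0.
  by exfalso; move/eqP: jk; apply; apply: injw; rewrite ej ek e.
move=> u [[A hA] hu].
pose s := enum_fset A.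
exists (size s), (fun j : 'I_(size s) => gen F (head 0%N (enum_fset (nth fset0 s j)))),
  (fun j : 'I_(size s) => u (nth fset0 s j)).
split; first by move=> j; eexists.
apply: functional_extensionality => S; rewrite /lincomb.
rewrite -(big_mkord xpredT (fun j => u (nth fset0 s j) *
    gen F (head 0%N (enum_fset (nth fset0 s j))) S)).
rewrite -(big_nth fset0 xpredT (fun T => u T * gen F (head 0%N (enum_fset T)) S)).
have e T : u T * gen F (head 0%N (enum_fset T)) S = if S == T then u T else 0.
  case: (eqVneq (u T) 0) => [->|uT]; first by rewrite mul0r; case: ifP.
  have := hu T uT; move/eqP/cardfs1P => [t et]; rewrite et head_fset1 /gen.
  by case: ifP; rewrite ?mulr1 ?mulr0.
under eq_bigr do rewrite e.
rewrite (@sum_single _ _ _ S) ?fset_uniq ?eqxx; last by move=> T _ /negbTE; rewrite eq_sym => ->.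
case: ifP => // SA; first exact: (hA S (negbT SA)).
by [].
Qed.

End G.

Local Close Scope fset_scope.
Unset Implicit Arguments.
Set Strict Implicit.

Theorem mainTheorem15 (F : fieldType) (Fchar0 : [pchar F] =i pred0)
    (phi : vec F -> vec F) :
  alg_auto phi -> involutive_on_E phi -> type4 phi ->
  forall psi : vec F -> vec F, linearization phi psi ->
  exists x : vec F, inL x /\ x <> vzero F /\ psi x = vopp x.
Proof.
move=> [hend _] hinv htype psi [hpsi hpsigen].
apply: NNPP => H.
have c0 i : phi (gen F i) fset0 = 0.
  have := f_mul hend (inE_gen F i) (inE_gen F i); rewrite gen_gen f_zero // => e.
  have := congr1 (fun h => h fset0) e; rewrite vmul0E /vzero => /esym/eqP.
  by rewrite mulf_eq0 orbb => /eqP.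
have card0 (S : {fset nat}) : (#|` S| < 1)%N -> S = fset0.
  by move=> h; apply: cardfs0_eq; move: h; case: (#|` S|).
have hphi1 i : deg_ge 1 (phi (gen F i)) by move=> S /card0 ->.
have hpsi1 i : deg_ge 1 (psi (gen F i)).
  by move=> S /card0 ->; rewrite hpsigen /lin_part cardfs0.
have hpsile i : deg_le 1 (psi (gen F i)).
  by move=> S hS; rewrite hpsigen /lin_part; case: eqP => // e; move: hS; rewrite e.
have hdiff i : deg_ge 2 (vadd (phi (gen F i)) (vopp (psi (gen F i)))).
  move=> S hS; rewrite hpsigen /vadd /vopp /lin_part; case: ifP => [_|/negbT h]; first by rewrite subrr.
  have /card0 -> : (#|` S| < 1)%N by move: hS h; case: (#|` S|) => [|[|]].
  by rewrite c0 subr0.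
have hdiff' i : deg_ge 2 (vadd (psi (gen F i)) (vopp (phi (gen F i)))).
  move=> S hS; have := hdiff i S hS; rewrite /vadd /vopp => /eqP.
  by rewrite -opprB oppr_eq0 => /eqP.
have inEphi : forall x, Defs.inE x -> Defs.inE (phi x) := f_inE hend.
have stepA i : psi (gen F i) = gen F i.
  set g := gen F i.
  have ig : Defs.inE g := inE_gen F i.
  set u := psi g.
  have iu : Defs.inE u by rewrite /u /g hpsigen; apply: inE_lin; apply: inEphi.
  set h := vadd (phi g) (vopp u).
  have ih : Defs.inE h by apply: inE_vadd; [apply: inEphi | apply: inE_vopp].
  have e1 : u = vadd (phi g) (vopp h).
    by apply: functional_extensionality => S; rewrite /h /vadd /vopp opprD opprK addNKr.
  have phiu : phi u = vadd g (vopp (phi h)).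
    by rewrite {1}e1 f_sub // ?hinv //; apply: inEphi.
  have hh : deg_ge 2 (phi h) by apply: (K1 hend hphi1) => //; apply: hdiff.
  have k2 := K2 hpsi hend hpsi1 hphi1 hdiff' iu (hpsi1 i : deg_ge 1 u).
  have k3 := K3 hpsi hpsile iu (hpsile i : deg_le 1 u).
  have psiu : psi u = g.
    apply: functional_extensionality => S.
    case: (ltnP #|` S| 2) => hS.
      have := k2 S hS; rewrite phiu /vadd /vopp (hh S hS) oppr0 addr0.
      by move/eqP; rewrite subr_eq0 => /eqP.
    by rewrite k3 //; rewrite /g /gen; case: eqP => // e; move: hS; rewrite e cardfs1.
  set x := vadd g (vopp u).
  have ix : Defs.inE x by apply: inE_vadd => //; apply: inE_vopp.
  have xz : x = vzero F.
    apply: NNPP => xnz; apply: H; exists x; split; last split => //.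
      split; first exact: ix.
      move=> S0; rewrite /x /vadd /vopp => hx; apply/eqP; move: hx; apply: contraTT => hS.
      have gS : g S0 = 0 by rewrite /g /gen; case: eqP => // eS; move: hS; rewrite eS cardfs1.
      have uS : u S0 = 0 by rewrite /u /g hpsigen /lin_part (negbTE hS).
      by rewrite negbK gS uS oppr0 addr0.
    rewrite f_sub // psiu; apply: functional_extensionality => S.
    by rewrite /x /vadd /vopp opprD opprK addrC.
  apply: functional_extensionality => S; apply/esym/subr0_eq.
  by have := congr1 (fun f => f S) xz.
have hid : alg_endo (@id (vec F)) by split=> //.
have hgen1 i : deg_ge 1 (gen F i) by move=> S /card0 ->; rewrite -(stepA i) hpsi1.
have hdiffB i : deg_ge 2 (vadd (phi (gen F i)) (vopp (id (gen F i)))).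
  by rewrite /= -{2}(stepA i); apply: hdiff.
set g0 := gen F 0.
set y := vadd (phi g0) (vopp g0).
have iy : Defs.inE y by apply: inE_vadd; [apply: inEphi; apply: inE_gen | apply: inE_vopp; apply: inE_gen].
have phiy : phi y = vadd g0 (vopp (phi g0)).
  by rewrite f_sub ?hinv //; apply: inE_gen || (apply: inEphi; apply: inE_gen).
have two : (2%:R : F) != 0 by rewrite (proj1 (pcharf0P F) Fchar0).
have ydeg d : deg_ge d y.
  elim: d => [|d IH]; first exact: deg_ge0.
  move=> S hS; have := K2 hend hid hphi1 hgen1 hdiffB iy IH hS.
  rewrite phiy /y /vadd /vopp /= => e.
  have : (g0 S - phi g0 S) * 2%:R = 0.
    by rewrite -e; ring.
  move/eqP; rewrite mulf_eq0 (negbTE two) orbF subr_eq0 => /eqP ->; exact: subrr.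
have fix0 : phi g0 = g0.
  apply: functional_extensionality => S; apply: subr0_eq.
  exact: (ydeg (#|` S|.+1) S (ltnSn _)).
apply: (htype _ (std_basis F)); exists g0; split; [by exists 0%N | by left].
Qed.
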